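(* Let $n,k$ be positive integers and let $\mathscr{K}_{n,k}$ be the family of all graphs with at most $n$ vertices that are disjoint unions of cliques, each clique having at most $k$ vertices. Then \[ \mathscr{U}(\mathscr{K}_{n,k}) ~=~ \sum_{i=1}^k \left\lfloor \frac{n}{i} \right\rfloor ~\ge~ (n+1)\ln(k+1) - k . \]
   Context: All graphs are finite and simple. A graph $U$ is an induced-universal graph for a family $\mathscr{F}$ of graphs if every graph of $\mathscr{F}$ is isomorphic to an induced subgraph of $U$. $\mathscr{U}(\mathscr{F})$ denotes the smallest number of vertices of an induced-universal graph for $\mathscr{F}$. *)

(* Defs.v *)
From mathcomp Require Import all_boot.
From Stdlib Require Import Reals.
Set Implicit Arguments. Unset Strict Implicit. Unset Printing Implicit Defensive.

Definition simple_graph (V : finType) (e : rel V) : Prop :=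
  symmetric e /\ irreflexive e.

Definition induced_subgraph (V W : finType) (e : rel V) (f : rel W) : Prop :=
  exists h : V -> W, injective h /\ forall x y, e x y = f (h x) (h y).

Definition graph_family := forall V : finType, rel V -> Prop.

Definition induced_universal (F : graph_family) (W : finType) (f : rel W) : Prop :=
  simple_graph f /\ forall (V : finType) (e : rel V), F V e -> induced_subgraph e f.

Definition is_U (F : graph_family) (m : nat) : Prop :=
  (exists (W : finType) (f : rel W), induced_universal F f /\ #|W| = m) /\
  (forall (W : finType) (f : rel W), induced_universal F f -> m <= #|W|).

Definition clique_union_bounded (k : nat) (V : finType) (e : rel V) : Prop :=
  exists P : {set {set V}},
    partition P [set: V] /\
    (forall B, B \in P -> #|B| <= k) /\
    (forall x y, e x y = (x != y) && (pblock P x == pblock P y)).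

Definition K_family (n k : nat) : graph_family :=
  fun V e => simple_graph e /\ #|V| <= n /\ clique_union_bounded k e.

(* Main.v *)
Require Import Defs.
From mathcomp Require Import all_boot.
From Stdlib Require Import Reals.
From mathcomp Require Import zify.
From Stdlib Require Import Lra Lia ClassicalEpsilon.
Set Implicit Arguments. Unset Strict Implicit. Unset Printing Implicit Defensive.

Lemma ln_step (k : nat) : (ln (INR k.+2) - ln (INR k.+1) <= / INR k.+1)%R.
Proof.
have h1 : (0 < INR k.+1)%R by apply: lt_0_INR; apply/ltP.
have h2 : (0 < INR k.+2)%R by apply: lt_0_INR; apply/ltP.
have hp : (0 < 1 + / INR k.+1)%R by have := Rinv_0_lt_compat _ h1; lra.
have e : (INR k.+2 = INR k.+1 * (1 + / INR k.+1))%R.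
  rewrite (S_INR k.+1); field; lra.
rewrite e ln_mult //.
have : (ln (1 + / INR k.+1) <= / INR k.+1)%R.
  rewrite -[X in (_ <= X)%R](ln_exp (/ INR k.+1)).
  have := exp_ineq1_le (/ INR k.+1) => hle.
  case: (Rle_lt_or_eq_dec _ _ hle) => [hl|->]; last by lra.
  by apply: Rlt_le; apply: ln_increasing.
lra.
Qed.

Lemma div_bound (n i : nat) : 0 < i -> (INR n.+1 / INR i - 1 <= INR (n %/ i))%R.
Proof.
move=> hi.
have hi' : (0 < INR i)%R by apply: lt_0_INR; apply/ltP.
have H : n.+1 <= (n %/ i).+1 * i.
  by rewrite -ltn_divLR // ltnS.
have H' : (INR n.+1 <= INR (n %/ i).+1 * INR i)%R.
  by rewrite -mult_INR; apply: le_INR; apply/leP.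
rewrite (S_INR (n %/ i)) Rmult_plus_distr_r Rmult_1_l in H'.
apply (Rmult_le_reg_r (INR i)) => //.
have -> : ((INR n.+1 / INR i - 1) * INR i = INR n.+1 - INR i)%R by field; lra.
lra.
Qed.

Lemma real_part (n k : nat) :
  (INR (n.+1) * ln (INR (k.+1)) - INR k <= INR (\sum_(1 <= i < k.+1) (n %/ i)))%R.
Proof.
elim: k => [|k IH].
  by rewrite big_geq // /= ln_1; lra.
have -> : \sum_(1 <= i < k.+2) (n %/ i) = \sum_(1 <= i < k.+1) (n %/ i) + n %/ k.+1 by rewrite big_nat_recr.
rewrite plus_INR.
have := ln_step k.
have := div_bound n (ltn0Sn k).
have hp : (0 <= INR n.+1)%R by apply: pos_INR.
move=> h1 h2.
have h3 : (INR n.+1 * (ln (INR k.+2) - ln (INR k.+1)) <= INR n.+1 / INR k.+1)%R.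
  by rewrite /Rdiv; apply: Rmult_le_compat_l.
have e := S_INR k. lra.
Qed.
Definition cg (m c : nat) : rel ('I_m * 'I_c) := fun x y => (x.1 == y.1) && (x.2 != y.2).

Lemma cg_in (n k m c : nat) : m * c <= n -> (0 < m -> c <= k) -> K_family n k (@cg m c).
Proof.
move=> hmc hk; split; [|split].
- split.
  + by move=> x y; rewrite /cg eq_sym [_.2 == _]eq_sym.
  + by move=> x; rewrite /cg !eqxx.
- by rewrite card_prod !card_ord.
- pose P := preim_partition (fun x : 'I_m * 'I_c => x.1) [set: 'I_m * 'I_c].
  have hP : partition P [set: _] by apply: preim_partitionP.
  exists P; split; first by [].
  have hR : {in [set: 'I_m * 'I_c] & &, equivalence_rel (fun x y : 'I_m * 'I_c => x.1 == y.1)}.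
    by move=> x y z _ _ _; split; [rewrite eqxx | move/eqP->].
  have hcov : forall x : 'I_m * 'I_c, x \in cover P.
    by move=> x; case/and3P: (hP) => /eqP -> _ _; rewrite inE.
  split.
  + move=> B BP.
    have [x _ ->] : exists2 x, x \in cover P & B = pblock P x.
      case/and3P: (hP) => _ _ h0.
      have /set0Pn [x xB] : B != set0 by apply: contraNneq h0 => <-.
      exists x; first by apply/bigcupP; exists B.
      by apply/esym/def_pblock => //; case/and3P: (hP).
    have mpos : 0 < m by case: x {hcov} => [[a ha] _] /=; lia.
    apply: leq_trans (hk mpos).
    suff : #|pblock P x| <= #|'I_c| by rewrite card_ord.
    rewrite -(@card_in_imset _ _ (fun y : 'I_m * 'I_c => y.2) (pblock P x)).
      by apply: max_card.
    move=> y z; rewrite !(pblock_equivalence_partition hR) ?inE //.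
    case: y z => [a b] [a' b'] /= /eqP e1 /eqP e2 e3.
    by rewrite -e1 -e2 e3.
  + move=> x y.
    case/and3P: (hP) => _ htriv _.
    rewrite eq_pblock // (pblock_equivalence_partition hR) ?inE //.
    rewrite /cg; case: (x.1 =P y.1) => e1 /=; last by rewrite andbF.
    rewrite andbT; congr negb.
    case: x y e1 => [a b] [a' b'] /= ->.
    by rewrite xpair_eqE eqxx.
Qed.
Lemma sdr (W : finType) (Cl : nat -> nat -> {set W}) (m : nat -> nat)
 (Hsz : forall j a, a < m j -> j <= #|Cl j a|)
 (Hkey : forall j i a1 a2 b w1 w2, w1 \in Cl j a1 -> w1 \in Cl i b ->
     w2 \in Cl j a2 -> w2 \in Cl i b -> a1 = a2) :
 forall t, exists R : {set W}, #|R| = \sum_(1 <= j < t.+1) m j /\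
   forall i b, #|Cl i b :&: R| <= t.
Proof.
elim=> [|t [R [HR HC]]].
  exists set0; split; first by rewrite cards0 big_geq.
  by move=> i b; rewrite setI0 cards0.
have Hex : forall a : 'I_(m t.+1), exists w, w \in Cl t.+1 a :\: R.
  move=> a; apply/set0Pn; rewrite -card_gt0.
  have := cardsID R (Cl t.+1 a).
  have := Hsz t.+1 a (ltn_ord a).
  have := HC t.+1 a.
  lia.
pose rep a := xchoose (Hex a).
have repP : forall a, rep a \in Cl t.+1 a :\: R by move=> a; exact: xchooseP.
have repC : forall a, rep a \in Cl t.+1 a by move=> a; have := repP a; rewrite inE => /andP[].
have repR : forall a, rep a \notin R by move=> a; have := repP a; rewrite inE => /andP[].
pose N := [set rep a | a in 'I_(m t.+1)].
have repI : injective rep.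
  move=> a1 a2 e; apply: val_inj.
  apply: (Hkey t.+1 t.+1 a1 a2 a2 (rep a1) (rep a2)) => //; by rewrite ?e repC.
exists (R :|: N); split.
  rewrite big_nat_recr //= -HR.
  rewrite cardsU.
  have -> : R :&: N = set0.
    apply/setP=> w; rewrite !inE; apply/negbTE; apply/negP=> /andP[wR /imsetP[a _ ew]].
    by move: (repR a); rewrite -ew wR.
  rewrite cards0 subn0 card_imset //.
  by rewrite card_ord.
move=> i b.
rewrite setIUr.
apply: leq_trans (leq_card_setU _ _) _.
rewrite -addn1 leq_add //.
apply/card_le1_eqP => w1 w2.
rewrite !inE => /andP[h1 /imsetP[a1 _ e1]] /andP[h2 /imsetP[a2 _ e2]].
subst.
suff -> : a1 = a2 by [].
apply: val_inj.
exact: (Hkey t.+1 i a1 a2 b).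
Qed.

Lemma lower (n k : nat) (W : finType) (f : rel W) :
  induced_universal (K_family n k) f -> \sum_(1 <= i < k.+1) (n %/ i) <= #|W|.
Proof.
move=> [_ HU].
pose m i := if i <= k then n %/ i else 0.
have Hh : forall i, exists h : 'I_(m i) * 'I_i -> W,
    injective h /\ forall x y, cg x y = f (h x) (h y).
  move=> i; apply: HU; apply: cg_in.
    rewrite /m; case: ifP => _ //; exact: leq_divM.
  by rewrite /m; case: ifP.
pose h i := proj1_sig (constructive_indefinite_description _ (Hh i)).
have hP : forall i, injective (h i) /\ forall x y, cg x y = f (h i x) (h i y).
  by move=> i; exact: (proj2_sig (constructive_indefinite_description _ (Hh i))).
pose Cl j a := [set w | [exists x : 'I_(m j) * 'I_j, (x.1 == a :> nat) && (h j x == w)]].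
have Hsz : forall j a, a < m j -> j <= #|Cl j a|.
  move=> j a ha.
  have e : #|[set h j (Ordinal ha, c) | c in 'I_j]| = j.
    rewrite card_imset ?card_ord //.
    move=> c1 c2 /(proj1 (hP j)) [].
    exact.
  rewrite -[X in X <= _]e.
  apply: subset_leq_card; apply/subsetP => w /imsetP[c _ ->].
  by rewrite inE; apply/existsP; exists (Ordinal ha, c); rewrite /= !eqxx.
have Hkey : forall j i a1 a2 b w1 w2, w1 \in Cl j a1 -> w1 \in Cl i b ->
     w2 \in Cl j a2 -> w2 \in Cl i b -> a1 = a2.
  move=> j i a1 a2 b w1 w2.
  rewrite !inE => /existsP[[x1 c1] /andP[/eqP e1 /eqP h1]]
     /existsP[[y1 d1] /andP[/eqP e2 /eqP h2]]
     /existsP[[x2 c2] /andP[/eqP e3 /eqP h3]]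
     /existsP[[y2 d2] /andP[/eqP e4 /eqP h4]].
  simpl in *.
  rewrite -e1 -e3.
  case: (x1 =P x2) => [->//|ne].
  have := proj2 (hP j) (x1, c1) (x2, c2).
  have := proj2 (hP i) (y1, d1) (y2, d2).
  rewrite h1 h2 h3 h4 => <-.
  rewrite /cg /=.
  have -> : (x1 == x2) = false by apply/eqP.
  have e : y1 = y2 by apply: val_inj; rewrite /= e2 e4.
  rewrite e eqxx /=.
  case: (d1 =P d2) => [ed|] //= _.
  have : h j (x1, c1) = h j (x2, c2) by rewrite h1 h3 -h2 -h4 e ed.
  by move/(proj1 (hP j)) => [/ne].
have [R [HR _]] := sdr Hsz Hkey k.
apply: leq_trans (max_card R).
rewrite HR leq_eqVlt; apply/orP; left; apply/eqP.
apply: eq_big_nat => i /andP[_ hi].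
by rewrite /m -ltnS hi.
Qed.
Definition Wt (n k : nat) := {x : 'I_k * 'I_n | x.2 < n %/ (x.1).+1}.
Definition fW (n k : nat) : rel (Wt n k) := fun u v => (u != v) && ((val u).2 == (val v).2).

Lemma card_Wt n k : #|{: Wt n k}| = \sum_(1 <= i < k.+1) (n %/ i).
Proof.
rewrite card_sig big_add1 /= big_mkord.
rewrite -sum1_card.
rewrite (eq_bigl (fun p : 'I_k * 'I_n => p.2 < n %/ p.1.+1)) //.
rewrite -(pair_big_dep xpredT (fun (i : 'I_k) (j : 'I_n) => j < n %/ i.+1) (fun _ _ => 1)) /=.
apply: eq_bigr => i _.
rewrite -(big_ord_widen n (fun _ => 1)); last exact: leq_div.
by rewrite sum1_card card_ord.
Qed.

Lemma upper_univ n k : induced_universal (K_family n k) (@fW n k).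
Proof.
split.
  split.
    by move=> u v; rewrite /fW eq_sym [(val u).2 == _]eq_sym.
  by move=> u; rewrite /fW eqxx.
move=> V e [_ [hV [P [hP [hB he]]]]].
case/and3P: (hP) => /eqP hcov' htriv h0.
have hcov : forall x, x \in cover P by move=> x; rewrite hcov' inE.
pose N := #|{: {set V}}|.
pose key (B : {set V}) := #|B| * N + enum_rank B.
have key_inj : injective key.
  move=> B1 B2; rewrite /key => ek.
  have N0 : 0 < N by apply: leq_ltn_trans (ltn_ord (enum_rank B1)).
  have := congr1 (modn^~ N) ek.
  rewrite !modnMDl !modn_small ?ltn_ord //.
  by move/val_inj/enum_rank_inj.
have key_mono : forall B B', key B < key B' -> #|B| <= #|B'|.
  move=> B B' lt; rewrite leqNgt; apply/negP => lt'.
  have h1 : key B' < #|B'|.+1 * N by rewrite /key mulSn [N + _]addnC ltn_add2l ltn_ord.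
  have h2 : #|B'|.+1 * N <= #|B| * N by rewrite leq_mul2r lt' orbT.
  have h3 : #|B| * N <= key B by rewrite /key leq_addr.
  by move: lt; rewrite ltnNge; move/negP; apply; apply: ltnW; apply: leq_trans h3; apply: leq_trans h2.
pose S B := [set B' in P | key B < key B'].
pose J B := #|S B|.
have Jlt : forall B1 B2, B2 \in P -> key B1 < key B2 -> J B2 < J B1.
  move=> B1 B2 B2P lt; apply: proper_card; apply/properP; split.
    apply/subsetP => B'; rewrite !inE => /andP[-> /(ltn_trans lt) ->] //.
  by exists B2; rewrite !inE ?B2P ?lt ?ltnn.
have J_inj : {in P &, injective J}.
  move=> B1 B2 B1P B2P eJ.
  case: (ltngtP (key B1) (key B2)) => [lt|lt|]; last exact: key_inj.
    by move: (Jlt _ _ B2P lt); rewrite eJ ltnn.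
  by move: (Jlt _ _ B1P lt); rewrite eJ ltnn.
have Jsize : forall B, B \in P -> (J B).+1 * #|B| <= #|V|.
  move=> B BP.
  have BS : B \notin S B by rewrite !inE ltnn andbF.
  have -> : (J B).+1 = #|B |: S B| by rewrite cardsU1 BS.
  rewrite -sum_nat_const.
  apply: (@leq_trans (\sum_(B' in B |: S B) #|B'|)).
    apply: leq_sum => B'; rewrite !inE => /orP[/eqP->//|/andP[_ /key_mono]] //.
  apply: (@leq_trans (\sum_(B' in P) #|B'|)); last by rewrite -(card_partition hP) cardsT.
  rewrite [X in _ <= X]big_mkcond [X in X <= _]big_mkcond /=.
  apply: leq_sum => B' _.
  case: ifP => //; rewrite !inE => /orP[/eqP->|/andP[-> _]] //.
  by rewrite BP.
pose i x := index x (enum (pblock P x)).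
pose j x := J (pblock P x).
have Hi : forall x, i x < k.
  move=> x; apply: leq_trans (hB _ (pblock_mem (hcov x))).
  by rewrite cardE index_mem mem_enum mem_pblock.
have Hw : forall x, j x < n %/ (i x).+1.
  move=> x; rewrite leq_divRL //.
  apply: leq_trans hV; apply: leq_trans (Jsize _ (pblock_mem (hcov x))).
  by rewrite leq_mul2l /i cardE index_mem mem_enum mem_pblock hcov orbT.
have Hj : forall x, j x < n by move=> x; apply: leq_trans (Hw x) (leq_div _ _).
pose h x := (exist (fun p : 'I_k * 'I_n => p.2 < n %/ p.1.+1) (Ordinal (Hi x), Ordinal (Hj x)) (Hw x) : Wt n k).
have hinj : injective h.
  move=> x y /(congr1 val) /= [ei ej].
  have eB : pblock P x = pblock P y.
    by apply: J_inj; rewrite ?pblock_mem ?hcov.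
  have := ei; rewrite /i eB.
  apply: index_inj => //; rewrite mem_enum ?mem_pblock ?hcov //.
  by rewrite -eB mem_pblock hcov.
exists h; split => // x y.
rewrite he /fW (inj_eq hinj) /=.
congr andb.
apply/eqP/eqP => [ej|ej].
  by apply: val_inj; rewrite /= /j ej.
by apply: J_inj; rewrite ?pblock_mem ?hcov //; move: ej => /(congr1 val).
Qed.

Theorem theorem1 (n k : nat) (hn : 0 < n) (hk : 0 < k) :
  is_U (K_family n k) (\sum_(1 <= i < k.+1) (n %/ i)) /\
  (INR (n.+1) * ln (INR (k.+1)) - INR k <= INR (\sum_(1 <= i < k.+1) (n %/ i)))%R.
Proof.
split; last exact: real_part.
split.
  exists (Wt n k), (@fW n k); split; first exact: upper_univ.
  exact: card_Wt.
move=> W f; exact: lower.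
Qed.
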